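(* Let $d\ge3$, $h\ge1$ and $0\le n\le h-1$. Then $$|G_{n+1}(d,h)/G_n(d,h)|=\begin{cases}\theta(d,h+1)^{d-1} & \text{if } n=0,\\ \theta(d,h+1-n)^{(d-2)d(d-1)^{n-1}} & \text{if } 1\le n\le h-1,\end{cases}$$ where $\theta(d,m):=\frac{(d-1)^m-1}{d-2}$.
   Context: Let $\mathcal{T}(d,h)$ be the rooted tree in which the root $0$ has $d$ children, every vertex at distance $1,\dots,h-1$ from the root has $d-1$ children, and the vertices at distance $h$ are leaves. Let $V$ be its vertex set, $A$ its adjacency matrix, $\Delta := dI-A$, and $\Lambda\subset\mathbb{Z}^V$ the lattice spanned by the rows of $\Delta$. Then $G(d,h):=\mathbb{Z}^V/\Lambda$; $\{\mathbf{x}_i:i\in V\}$ is the standard basis of $\mathbb{Z}^V$ and $\bar{\mathbf{x}}_i$ is the image of $\mathbf{x}_i$ in $G(d,h)$. For $0\le m\le h$, $G_m(d,h)$ is the subgroup of $G(d,h)$ generated by $\{\bar{\mathbf{x}}_i : i \text{ at distance}\le m\text{ from the root}\}$. *)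

(* Defs.v *)
From mathcomp Require Import all_boot all_order all_algebra.
Set Implicit Arguments. Unset Strict Implicit. Unset Printing Implicit Defensive.
Import Order.TTheory GRing.Theory Num.Theory.
Local Open Scope ring_scope.

(* Vertices of T(d,h): a vertex at depth k (0 <= k <= h) is encoded by its
   path of child-labels from the root: (k, f) with f : 'I_h -> 'I_d, where
   f 0 < d (child index of the root's child), f i < d-1 for 1 <= i < k, and
   f i = 0 for i >= k (normalization, so the encoding is unique). *)
Definition vpred (d h : nat) (x : 'I_h.+1 * {ffun 'I_h -> 'I_d}) : bool :=
  [forall i : 'I_h,
     if (i < x.1)%N then ((0 < i)%N ==> (x.2 i < d.-1)%N)
     else (x.2 i == 0 :> nat)].

Definition vert (d h : nat) := {x : 'I_h.+1 * {ffun 'I_h -> 'I_d} | @vpred d h x}.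

Definition depth d h (v : vert d h) : nat := (val v).1.
Definition label d h (v : vert d h) (i : 'I_h) : nat := (val v).2 i.

Definition child d h (x y : vert d h) : bool :=
  (depth y == (depth x).+1) &&
  [forall i : 'I_h, (i < depth x)%N ==> (label y i == label x i)].

Definition adj d h (x y : vert d h) : bool := child x y || child y x.

Definition Delta d h (i j : vert d h) : int :=
  (if i == j then (d%:Z) else 0) - (if adj i j then 1 else 0).

Definition zvec d h := vert d h -> int.

(* Preimage in Z^V of G_m(d,h): the subgroup L_m + Lambda, where L_m is spanned by
   the x_i with depth i <= m, and Lambda is spanned by the rows of Delta.
   v lies in it iff v minus some integer combination of rows of Delta is
   supported on vertices of depth <= m. *)
Definition inGm d h (m : nat) (v : zvec d h) : Prop :=
  exists c : vert d h -> int,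
    forall j, (m < depth j)%N -> v j = \sum_i c i * Delta i j.

(* |H / K| = N for subgroups K <= H of Z^V: there is a transversal of size N,
   i.e. N elements of H, pairwise incongruent mod K, such that every element
   of H is congruent mod K to one of them. *)
Definition quot_card d h (H K : zvec d h -> Prop) (N : nat) : Prop :=
  exists s : 'I_N -> zvec d h,
    (forall k, H (s k)) /\
    (forall k l, K (fun j => s k j - s l j) -> k = l) /\
    (forall v, H v -> exists k, K (fun j => v j - s k j)).

(* theta(d,m) = ((d-1)^m - 1)/(d-2)  (an exact division for d >= 3) *)
Definition theta (d m : nat) : nat := (((d - 1) ^ m - 1) %/ (d - 2))%N.

(* Main.v *)
Require Import Defs.
From mathcomp Require Import all_boot all_order all_algebra.
From mathcomp Require Import zify ring.
Set Implicit Arguments. Unset Strict Implicit. Unset Printing Implicit Defensive.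
Import Order.TTheory GRing.Theory Num.Theory.

Section Tree.
Variables q h : nat.
Local Notation d := q.+3.
Local Notation V := (vert d h).

Lemma dep_le (v : V) : (depth v <= h)%N.
Proof. by rewrite /depth -ltnS ltn_ord. Qed.

Lemma lab_hi (v : V) (i : 'I_h) : (depth v <= i)%N -> label v i = 0%N.
Proof.
move=> hi; have /forallP/(_ i) := valP v.
by rewrite /depth in hi; rewrite ltnNge hi /= => /eqP.
Qed.

Lemma lab_mid (v : V) (i : 'I_h) : (0 < i)%N -> (i < depth v)%N -> (label v i < q.+2)%N.
Proof.
move=> i0 iv; have /forallP/(_ i) := valP v.
by rewrite /depth in iv; rewrite iv i0.
Qed.

Lemma vertP (v w : V) : depth v = depth w -> (forall i, label v i = label w i) -> v = w.
Proof.
move=> e l; apply: val_inj; case: v w e l => [[a f] ?] [[b g] ?] /= e l.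
rewrite /depth /label /= in e l.
congr pair; first exact: val_inj.
by apply/ffunP => i; apply: val_inj; exact: l.
Qed.

Definition trunc_raw (m : nat) (v : V) : 'I_h.+1 * {ffun 'I_h -> 'I_d} :=
  (inord (minn m (depth v)), [ffun i : 'I_h => if (i < m)%N then (val v).2 i else ord0]).

Lemma trunc_ok m v : vpred (trunc_raw m v).
Proof.
apply/forallP => i /=; rewrite inordK; last by rewrite ltnS geq_min dep_le orbT.
rewrite ffunE; case: ifP => him.
  have im : (i < m)%N by move: him; rewrite leq_min => /andP[].
  have iv : (i < depth v)%N by move: him; rewrite leq_min => /andP[].
  by rewrite im; have /forallP/(_ i) := valP v; rewrite /depth in iv; rewrite iv.
case: ifP => im //.
have iv : (depth v <= i)%N.
  by move: him; rewrite leq_min im /= => /negbT; rewrite -leqNgt.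
by apply/eqP; exact: (lab_hi iv).
Qed.

Definition trunc m v : V := exist _ (trunc_raw m v) (trunc_ok m v).

Lemma dep_trunc m v : depth (trunc m v) = minn m (depth v).
Proof. by rewrite /depth /= inordK // ltnS geq_min dep_le orbT. Qed.

Lemma lab_trunc m v i : label (trunc m v) i = if (i < m)%N then label v i else 0%N.
Proof. by rewrite /label /= ffunE; case: ifP. Qed.

Lemma trunc_id m v : (depth v <= m)%N -> trunc m v = v.
Proof.
move=> vm; apply: vertP; first by rewrite dep_trunc; apply/minn_idPr.
move=> i; rewrite lab_trunc; case: ifP => // /negbT; rewrite -leqNgt => mi.
by rewrite lab_hi // (leq_trans vm mi).
Qed.

Lemma trunc_trunc m k v : trunc m (trunc k v) = trunc (minn m k) v.
Proof.
apply: vertP; first by rewrite !dep_trunc minnA.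
by move=> i; rewrite !lab_trunc leq_min; case: (i < m)%N; case: (i < k)%N.
Qed.

Definition par (v : V) := trunc (depth v).-1 v.

Lemma dep_par v : depth (par v) = (depth v).-1.
Proof. by rewrite dep_trunc; apply/minn_idPl; rewrite leq_pred. Qed.

Lemma childE (p y : V) : child p y = (0 < depth y)%N && (par y == p).
Proof.
apply/idP/idP.
  case/andP => /eqP ey /forallP ag; rewrite ey /=; apply/eqP/vertP.
    by rewrite dep_par ey.
  move=> i; rewrite lab_trunc ey /=; case: ifP => hi.
    by have := ag i; rewrite hi => /eqP.
  by rewrite lab_hi // leqNgt hi.
case/andP => pos /eqP <-; rewrite /child dep_par prednK // eqxx /=.
by apply/forallP => i; apply/implyP => hi; rewrite lab_trunc hi.
Qed.

Lemma adj_sym (i j : V) : adj i j = adj j i.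
Proof. by rewrite /adj orbC. Qed.

Lemma Delta_sym (i j : V) : Delta i j = Delta j i.
Proof. by rewrite /Delta adj_sym eq_sym. Qed.

Definition desc (u j : V) := trunc (depth u) j == u.

Lemma desc_dep u j : desc u j -> (depth u <= depth j)%N.
Proof. by move/eqP=> e; rewrite -{1}e dep_trunc geq_minr. Qed.

Lemma desc_refl u : desc u u.
Proof. by rewrite /desc trunc_id. Qed.

Lemma desc_eqdep u j : desc u j -> (depth j <= depth u)%N -> j = u.
Proof. by move=> /eqP e ju; rewrite -e trunc_id. Qed.

Lemma desc_par u j : desc u j -> j != u -> (0 < depth j)%N && desc u (par j).
Proof.
move=> dj ne.
have lt : (depth u < depth j)%N.
  rewrite ltn_neqAle desc_dep // andbT; apply: contra ne => /eqP e.
  by apply/eqP/(desc_eqdep dj); rewrite e.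
rewrite (leq_ltn_trans _ lt) //.
rewrite /desc /par trunc_trunc.
have -> : minn (depth u) (depth j).-1 = depth u.
  by apply/minn_idPl; rewrite -ltnS prednK // (leq_ltn_trans _ lt).
exact: dj.
Qed.

Lemma desc_child u j y : desc u j -> child j y -> desc u y.
Proof.
move=> dj; rewrite childE => /andP[pos /eqP e].
have := desc_dep dj; rewrite -e dep_par => le.
by move: dj; rewrite /desc -e /par trunc_trunc; move/minn_idPl: le => ->.
Qed.

Lemma par_ndesc u : (0 < depth u)%N -> ~~ desc u (par u).
Proof.
move=> pos; apply/negP => /desc_dep; rewrite dep_par.
by case: (depth u) pos => // n _; rewrite ltnn.
Qed.


Definition aa (p : V) (a : 'I_d) : 'I_d :=
  if (depth p == 0%N) || (a < q.+2)%N then a else ord0.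

Definition ext_raw (p : V) (a : 'I_d) : 'I_h.+1 * {ffun 'I_h -> 'I_d} :=
  (inord (minn (depth p).+1 h),
   [ffun i : 'I_h => if (i == depth p :> nat) then aa p a else (val p).2 i]).

Lemma ext_ok p a : vpred (ext_raw p a).
Proof.
apply/forallP => i /=; rewrite inordK; last by rewrite ltnS geq_minr.
rewrite ffunE; case: ifP => him.
  case: eqP => [ei|ne].
    rewrite /aa; case: eqP => [p0|p0] /=; first by rewrite ei p0.
    by case: ifP => [->|_] /=; rewrite implybT.
  have iv : (i < depth p)%N.
    move: him; rewrite leq_min => /andP[]; rewrite ltnS leq_eqVlt.
    by case/orP => // /eqP.
  by have /forallP/(_ i) := valP p; rewrite /depth in iv; rewrite iv.
have ne : (i != depth p :> nat).
  apply/eqP => e; move: him; rewrite leq_min ltn_ord andbT e ltnS leqnn.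
  by [].
rewrite (negbTE ne); apply/eqP; apply: lab_hi.
move: him; rewrite leq_min ltn_ord andbT ltnS => /negbT; rewrite -ltnNge.
by move=> /ltnW.
Qed.

Definition ext p a : V := exist _ (ext_raw p a) (ext_ok p a).

Lemma dep_ext (p : V) a : (depth p < h)%N -> depth (ext p a) = (depth p).+1.
Proof. by move=> ph; rewrite /depth /= inordK ?ltnS ?geq_minr //; apply/minn_idPl. Qed.

Lemma lab_ext (p : V) a i : label (ext p a) i = if (i == depth p :> nat) then (aa p a : nat) else label p i.
Proof. by rewrite /label /= ffunE; case: ifP. Qed.

Lemma child_ext (p : V) a : (depth p < h)%N -> child p (ext p a).
Proof.
move=> ph; rewrite /child dep_ext // eqxx /=; apply/forallP => i; apply/implyP => ip.
by rewrite lab_ext (ltn_eqF ip).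
Qed.

Lemma par_ext (p : V) a : (depth p < h)%N -> par (ext p a) = p.
Proof. by move=> ph; have := child_ext a ph; rewrite childE => /andP[_ /eqP]. Qed.

Lemma ext_child (p y : V) (hp : (depth p < h)%N) :
  child p y -> y = ext p ((val y).2 (Ordinal hp)).
Proof.
move=> cy; have := cy; case/andP => /eqP ey /forallP ag.
apply: vertP; first by rewrite dep_ext.
move=> i; rewrite lab_ext; case: eqP => [ei|ne].
  have -> : i = Ordinal hp by apply: val_inj.
  rewrite /aa; case: eqP => //= p0; case: ifP => // /negbT.
  by rewrite (lab_mid (i := Ordinal hp)) //= ?ey // lt0n; apply/eqP.
case: (ltngtP i (depth p)) => [lt|gt|eq]; last by [].
  by have := ag i; rewrite lt => /eqP.
by rewrite !lab_hi // ?ey // ltnW.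
Qed.

Lemma aa_id (p : V) (a : 'I_d) : (depth p == 0%N) || (a < q.+2)%N -> aa p a = a.
Proof. by rewrite /aa => ->. Qed.

Lemma card_lt n m : (m <= n)%N -> #|[set a : 'I_n | (a < m)%N]| = m.
Proof.
move=> le.
have -> : [set a : 'I_n | (a < m)%N] = [set widen_ord le b | b : 'I_m].
  apply/setP => a; rewrite inE; apply/idP/imsetP.
    by move=> am; exists (Ordinal am) => //; apply: val_inj.
  by case=> b _ ->; rewrite /= ltn_ord.
rewrite card_imset ?card_ord //.
by move=> x y /(congr1 val) /= /val_inj.
Qed.

Lemma card_ch (p : V) : (depth p < h)%N ->
  #|[set y | child p y]| = if depth p == 0%N then d else q.+2.
Proof.
move=> ph.
have -> : [set y | child p y] = ext p @: [set a : 'I_d | (depth p == 0%N) || (a < q.+2)%N].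
  apply/setP => y; rewrite inE; apply/idP/imsetP.
    move=> cy; exists ((val y).2 (Ordinal ph)); last exact: ext_child.
    rewrite inE; case: eqP => //= p0.
    have := cy; case/andP => /eqP ey _.
    by apply: (lab_mid (i := Ordinal ph)); rewrite //= ?ey // lt0n; apply/eqP.
  by case=> a _ ->; exact: child_ext.
rewrite card_in_imset.
  case: eqP => _ /=; last by rewrite card_lt.
  by rewrite -[in RHS](card_ord d); apply: eq_card => a; rewrite inE.
move=> a b; rewrite !inE => ca cb e.
have := congr1 (fun v => label v (Ordinal ph)) e; rewrite /= !lab_ext /= eqxx.
by rewrite !aa_id // => /val_inj.
Qed.

Lemma card_ch_h (p : V) : depth p = h -> #|[set y | child p y]| = 0%N.
Proof.
move=> ph; apply/eqP; rewrite cards_eq0; apply/eqP/setP => y; rewrite !inE.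
apply/negP; case/andP => /eqP ey _; have := dep_le y; by rewrite ey ph ltnn.
Qed.

Definition fc (p : V) := ext p ord0.

Definition root_raw : 'I_h.+1 * {ffun 'I_h -> 'I_d} := (ord0, [ffun => ord0]).
Lemma root_ok : vpred root_raw.
Proof. by apply/forallP => i; rewrite /= ffunE. Qed.
Definition root : V := exist _ root_raw root_ok.

Lemma card_dep0 : #|[set y : V | depth y == 0%N]| = 1%N.
Proof.
rewrite -(cards1 root); apply: eq_card => y; rewrite !inE.
apply/idP/idP => [/eqP y0|/eqP ->]; last by [].
apply/eqP/vertP => [|i]; first by rewrite y0.
by rewrite lab_hi ?y0 // /label /= ffunE.
Qed.

Lemma card_next t (Q : pred V) : (t < h)%N ->
  #|[set y | (depth y == t.+1) && Q y]| =
  (\sum_(p | depth p == t) #|[set y | child p y && Q y]|)%N.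
Proof.
move=> th; rewrite -sum1_card.
rewrite (partition_big par (fun p => depth p == t)); last first.
  by move=> y; rewrite inE => /andP[/eqP e _]; rewrite dep_par e.
apply: eq_bigr => p /eqP pt; rewrite -sum1_card; apply: eq_bigl => y.
rewrite !inE childE; case: eqP => [e|ne] /=.
  by rewrite e andbC.
case: eqP => [pe|_]; last by rewrite andbF.
rewrite andbT; apply/esym/negbTE; apply/negP => /andP[pos _].
by apply: ne; rewrite -pt -pe dep_par prednK.
Qed.

Lemma card_dep t : (t <= h)%N ->
  #|[set y : V | depth y == t]| = if t == 0%N then 1%N else (d * q.+2 ^ t.-1)%N.
Proof.
elim: t => [|t IH] th; first by rewrite card_dep0.
have -> : [set y : V | depth y == t.+1] = [set y | (depth y == t.+1) && true].
  by apply/setP => y; rewrite !inE andbT.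
rewrite card_next //.
rewrite (eq_bigr (fun _ => if t == 0%N then d else q.+2)); last first.
  move=> p /eqP pt; have := @card_ch p; rewrite pt => /(_ th) <-.
  by apply: eq_card => y; rewrite !inE andbT.
rewrite sum_nat_const.
rewrite (@eq_card _ _ [set y : V | depth y == t]); last by move=> y; rewrite inE.
rewrite IH ?(ltnW th) //.
case: t {IH th} => [|t] //=; first by rewrite mul1n expn0 muln1.
by rewrite expnS -mulnA [(_ ^ t * _)%N]mulnC.
Qed.


Fixpoint th (m : nat) : nat := if m is m'.+1 then (q.+2 * th m' + 1)%N else 0%N.

Lemma thetaE m : theta d m = th m.
Proof.
rewrite /theta !subSS !subn0.
suff -> : (q.+2 ^ m - 1 = q.+1 * th m)%N by rewrite mulKn.
elim: m => [|m IH]; first by rewrite expn0 muln0.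
rewrite [th _]/=.
have X1 : (0 < q.+2 ^ m)%N by rewrite expn_gt0.
rewrite expnS; move: IH X1; set X := (q.+2 ^ m)%N; set Y := th m; nia.
Qed.

Lemma th_pos m : (0 < th m.+1)%N.
Proof. by rewrite /= addn1. Qed.

Local Open Scope ring_scope.

Definition om (j : V) : int := (th (h.+1 - depth j))%:Z.
Definition W (u j : V) : int := if desc u j then om j else 0.

Lemma child_dep (i j : V) : child i j -> depth j = (depth i).+1.
Proof. by case/andP => /eqP. Qed.

Lemma sum_child_W u i :
  \sum_j (if child i j then W u j else 0) =
  (th (h - depth i))%:Z *+ #|[set j | child i j && desc u j]|.
Proof.
rewrite (eq_bigr (fun j => if child i j && desc u j then (th (h - depth i))%:Z else 0)).
  rewrite -big_mkcond sumr_const; congr (_ *+ _); apply: eq_card => j.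
  by rewrite inE.
move=> j _; case: ifP => cj //=; rewrite /W; case: ifP => //= _.
by rewrite /om (child_dep cj) subSS.
Qed.

Lemma sum_child_inv u i :
  \sum_j (if child j i then W u j else 0) =
  if (0 < depth i)%N then W u (par i) else 0.
Proof.
rewrite (eq_bigr (fun j => if j == par i then (if (0 < depth i)%N then W u j else 0) else 0)).
  rewrite -big_mkcond big_pred1_eq; by [].
move=> j _; rewrite childE eq_sym; case: (0 < depth i)%N; case: (_ == _) => //.
Qed.

Lemma child_both (i j : V) : child i j -> child j i -> False.
Proof.
move=> /child_dep a /child_dep b; move: a; rewrite b; lia.
Qed.

Lemma sum_adj_W u i :
  \sum_j (if adj i j then W u j else 0) =
  \sum_j (if child i j then W u j else 0) + \sum_j (if child j i then W u j else 0).
Proof.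
rewrite -big_split /=; apply: eq_bigr => j _; rewrite /adj.
case: (boolP (child i j)) => c1; case: (boolP (child j i)) => c2 //=; rewrite ?addr0 ?add0r //.
by case: (child_both c1 c2).
Qed.

Lemma th_rec m : (th m.+1)%:Z = (q.+2)%:Z * (th m)%:Z + 1.
Proof. by rewrite /= PoszD PoszM. Qed.

Lemma desc_parE u i : (0 < depth u)%N -> desc u i -> desc u (par i) = (i != u).
Proof.
move=> pu di; case: eqP => [->|/eqP ne]; first exact/negbTE/par_ndesc.
by case/andP: (desc_par di ne).
Qed.

Lemma core u i : (0 < depth u)%N ->
  \sum_j W u j * Delta i j =
  (if i == u then (th (h.+2 - depth u))%:Z else 0) -
  (if i == par u then (th (h.+1 - depth u))%:Z else 0).
Proof.
move=> pu.
rewrite (eq_bigr (fun j => (if i == j then W u j * d%:Z else 0) - (if adj i j then W u j else 0))); last first.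
  by move=> j _; rewrite /Delta mulrBr; case: eqP => [->|_]; case: adj; rewrite ?mulr0 ?mulr1.
rewrite sumrB.
rewrite (eq_bigr (fun j => if j == i then W u j * d%:Z else 0)); last by move=> j _; rewrite eq_sym.
rewrite -big_mkcond big_pred1_eq sum_adj_W sum_child_W sum_child_inv.
have hi := dep_le i.
case: (boolP (desc u i)) => di.
- have cnt : #|[set j | child i j && desc u j]| = if (depth i < h)%N then q.+2 else 0%N.
    have -> : [set j | child i j && desc u j] = [set j | child i j].
      by apply/setP => j; rewrite !inE; case: (boolP (child i j)) => //= /(desc_child di).
    case: ltnP => ih.
      rewrite card_ch // ifF //; apply/negbTE; rewrite -lt0n.
      exact: (leq_trans pu (desc_dep di)).
    by rewrite card_ch_h //; apply/eqP; rewrite eqn_leq hi.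
  have ipos : (0 < depth i)%N := leq_trans pu (desc_dep di).
  rewrite ipos /W (desc_parE pu di) di.
  have -> : (i == par u) = false.
    by apply/negbTE; apply: contraNneq (par_ndesc pu) => <-.
  have e1 : (h.+1 - depth i = (h - depth i).+1)%N by lia.
  have e2 : (h.+1 - depth (par i) = (h - depth i).+2)%N by rewrite dep_par; lia.
  have e3 : (h.+2 - depth i = (h - depth i).+2)%N by lia.
  have Hc : (th (h - depth i))%:Z *+ #|[set j | child i j && desc u j]| = (th (h - depth i))%:Z * (q.+2)%:Z.
    rewrite cnt; case: ltnP => ih; first by rewrite -mulr_natr natz.
    have -> : (h - depth i = 0)%N by apply/eqP; rewrite subn_eq0.
    by rewrite /= mul0r.
  rewrite Hc /om e1 e2.
  case: eqP => [E|ne] /=.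
    by rewrite -E e3 subr0 !th_rec; nia.
  by rewrite !th_rec; nia.
- have -> : W u i = 0 by rewrite /W (negbTE di).
  have -> : (if (0 < depth i)%N then W u (par i) else 0) = 0.
    case: ifP => // ip; rewrite /W; case: ifP => // dp; exfalso; move/negP: di; apply.
    by apply: (desc_child dp); rewrite childE ip eqxx.
  have -> : (i == u) = false by apply/negbTE; apply: contraNneq di => ->; exact: desc_refl.
  case: eqP => [ipu|nipu].
    have -> : [set j | child i j && desc u j] = [set u].
      apply/setP => j; rewrite !inE; apply/idP/idP.
        case/andP => cj dj; apply/eqP; apply: contraNeq di => ne.
        by case/andP: (desc_par dj ne) => _; rewrite (childE i j) in cj; case/andP: cj => _ /eqP ->.
      by move/eqP ->; rewrite desc_refl childE pu ipu eqxx.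
    rewrite cards1 ipu dep_par.
    have -> : (h - (depth u).-1 = h.+1 - depth u)%N by have := dep_le u; lia.
    by rewrite mul0r addr0 add0r.
  have -> : [set j | child i j && desc u j] = set0.
    apply/setP => j; rewrite !inE; apply/negP => /andP[cj dj].
    have ne : j != u by apply/eqP => e; apply: nipu; move: cj; rewrite e childE => /andP[_ /eqP ->].
    case/andP: (desc_par dj ne) => _; rewrite childE in cj; case/andP: cj => _ /eqP ->.
    by move/negP: di.
  by rewrite cards0 mulr0n mul0r addr0.
Qed.


Lemma sum_pt (F : V -> int) (x : V) (a : int) :
  \sum_i F i * (if i == x then a else 0) = F x * a.
Proof.
rewrite (bigD1 x) //= eqxx big1 ?addr0 // => i /negbTE ->; by rewrite mulr0.
Qed.

Lemma key (c : V -> int) u : (0 < depth u)%N ->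
  \sum_j W u j * (\sum_i c i * Delta i j) =
  (th (h.+2 - depth u))%:Z * c u - (th (h.+1 - depth u))%:Z * c (par u).
Proof.
move=> pu.
rewrite (eq_bigr (fun j => \sum_i c i * (W u j * Delta i j))); last first.
  by move=> j _; rewrite mulr_sumr; apply: eq_bigr => i _; rewrite mulrCA.
rewrite exchange_big /=.
rewrite (eq_bigr (fun i => c i * ((if i == u then (th (h.+2 - depth u))%:Z else 0) -
  (if i == par u then (th (h.+1 - depth u))%:Z else 0)))); last first.
  by move=> i _; rewrite -mulr_sumr core.
rewrite (eq_bigr (fun i => c i * (if i == u then (th (h.+2 - depth u))%:Z else 0) -
   c i * (if i == par u then (th (h.+1 - depth u))%:Z else 0))); last by move=> i _; rewrite mulrBr.
by rewrite sumrB !sum_pt mulrC [c (par u) * _]mulrC.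
Qed.

Lemma Delta_low (i j : V) : (depth i < depth j)%N -> Delta i j = if par j == i then -1 else 0.
Proof.
move=> lt; rewrite /Delta.
have -> : (i == j) = false by apply/negbTE; apply: contraTneq lt => ->; rewrite ltnn.
rewrite /adj childE (leq_ltn_trans _ lt) //=.
have -> : child j i = false.
  by apply/negbTE/negP => /child_dep e; move: lt; rewrite e ltnNge leqnSn.
by rewrite orbF; case: eqP.
Qed.

Lemma small_eq (a b m : nat) (tt : int) : (a < m)%N -> (b < m)%N ->
  a%:Z - b%:Z = m%:Z * tt -> a = b.
Proof.
move=> am bm E2.
have [t0|[t1|t1]] : tt = 0 \/ (1 <= tt \/ tt <= -1) by lia.
- by move: E2; rewrite t0 mulr0; lia.
- have : m%:Z <= m%:Z * tt by rewrite -{1}[m%:Z]mulr1 ler_wpM2l.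
  lia.
- have : m%:Z * tt <= - m%:Z by rewrite -mulrN1 ler_wpM2l.
  lia.
Qed.

Section Main.
Variable n : nat.
Hypothesis nh : (n < h)%N.

Local Notation M := (th (h.+1 - n)).

Lemma Mpos : (0 < M)%N.
Proof. by rewrite subSn ?th_pos // ltnW. Qed.

Definition S : {set V} := [set y | (depth y == n.+1) && (y != fc (par y))].

Lemma dep_fc (p : V) : depth p = n -> depth (fc p) = n.+1.
Proof. by move=> e; rewrite /fc dep_ext e. Qed.

Lemma par_fc (p : V) : depth p = n -> par (fc p) = p.
Proof. by move=> e; rewrite /fc par_ext // e. Qed.

Lemma fc_notS (p : V) : depth p = n -> fc p \notin S.
Proof. by move=> e; rewrite inE par_fc // eqxx andbF. Qed.

Lemma dist_core (c z : V -> int) u :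
  depth u = n.+1 ->
  (forall j, (n < depth j)%N -> z j = \sum_i c i * Delta i j) ->
  (forall j, (n.+1 < depth j)%N -> z j = 0) ->
  z u + c (par u) = M%:Z * (z u + c (par u) - (q.+2)%:Z * c u).
Proof.
move=> du hz h0.
have := key c (u := u); rewrite du => /(_ isT).
rewrite (eq_bigr (fun j => if j == u then om u * z u else 0)); last first.
  move=> j _; rewrite /W; case: ifP => dj; last by rewrite mul0r; case: eqP => // e; move: dj; rewrite e desc_refl.
  rewrite -hz; last by rewrite (leq_trans _ (desc_dep dj)) // du.
  case: eqP => [->//|/eqP ne].
  rewrite h0 ?mulr0 //; rewrite -du ltn_neqAle desc_dep // andbT.
  by apply: contra ne => /eqP e; apply/eqP/(desc_eqdep dj); rewrite e.
rewrite -big_mkcond big_pred1_eq /om du.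
have e1 : (h.+2 - n.+1 = h.+1 - n)%N by rewrite subSS.
have e2 : (h.+1 - n = (h - n).+1)%N by rewrite subSn // ltnW.
rewrite e1 subSS e2 th_rec => E.
set A := (th (h - n))%:Z in E *.
have E' : A * (z u + c (par u)) = ((q.+2)%:Z * A + 1) * c u by rewrite mulrDr E; ring.
apply/eqP; rewrite -subr_eq0; apply/eqP.
transitivity (- (q.+2)%:Z * (A * (z u + c (par u)) - ((q.+2)%:Z * A + 1) * c u)); first by ring.
by rewrite E' subrr mulr0.
Qed.

Definition F := {ffun {y : V | y \in S} -> 'I_M}.

Definition vec (f : F) : V -> int :=
  fun j => if (insub j : option {y : V | y \in S}) is Some s then (f s : nat)%:Z else 0.

Lemma vec_in f j (jS : j \in S) : vec f j = (f (exist _ j jS) : nat)%:Z.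
Proof. by rewrite /vec insubT. Qed.

Lemma vec_out f j : j \notin S -> vec f j = 0.
Proof. by move=> jS; rewrite /vec insubF //; apply/negbTE. Qed.

Lemma vec_hi f j : (n.+1 < depth j)%N -> vec f j = 0.
Proof.
move=> lt; apply: vec_out; rewrite inE; apply/negP => /andP[/eqP e _].
by move: lt; rewrite e ltnn.
Qed.

Lemma quot_main : quot_card (@inGm d h n.+1) (@inGm d h n) #|F|.
Proof.
exists (fun k => vec (enum_val k)); split; [|split].
- move=> k; exists (fun _ => 0) => j lt; rewrite vec_hi //.
  by rewrite big1 // => i _; rewrite mul0r.
- move=> k l [c hc]; apply: enum_val_inj.
  set f := enum_val k; set g := enum_val l.
  apply/ffunP => x; apply: val_inj.
  set z := fun j => vec f j - vec g j.
  have h0 : forall j, (n.+1 < depth j)%N -> z j = 0.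
    by move=> j lt; rewrite /z !vec_hi // subrr.
  have xS := valP x; set u := val x in xS.
  have du : depth u = n.+1 by move: xS; rewrite inE => /andP[/eqP].
  have dp : depth (par u) = n by rewrite dep_par du.
  have H1 := @dist_core c z u du hc h0.
  have H2 := @dist_core c z _ (dep_fc dp) hc h0.
  have zfc : z (fc (par u)) = 0 by rewrite /z !vec_out ?subrr // fc_notS.
  rewrite zfc add0r par_fc // in H2.
  have zu : z u = (f x : nat)%:Z - (g x : nat)%:Z.
    have ex : exist _ u xS = x by apply: val_inj.
    by rewrite /z !(vec_in _ xS) ex.
  have fM := ltn_ord (f x); have gM := ltn_ord (g x).
  move: H1 H2; rewrite zu; set T := c (par u); set cu := c u; set cf := c (fc (par u)).
  move=> H1 H2.
  set D := (f x : nat)%:Z - (g x : nat)%:Z in H1 *.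
  have E : D = M%:Z * (D + T - (q.+2)%:Z * cu) - M%:Z * (T - (q.+2)%:Z * cf).
    by rewrite -H1 -H2; ring.
  have E2 : D = M%:Z * (D - (q.+2)%:Z * cu + (q.+2)%:Z * cf) by rewrite {1}E; ring.
  move: E2; set t := (D - _ + _); rewrite /D => E2.
  exact: small_eq fM gM E2.
- move=> v [c hv].
  pose r j := v j - \sum_i c i * Delta i j.
  pose dd u := r u - r (fc (par u)).
  have Mz : (0 < M%:Z) by rewrite ltz_nat Mpos.
  have ltM : forall y : V, (`|(dd y %% M%:Z)%Z|%N < M)%N.
    move=> y; have h0 := modz_ge0 (dd y) (lt0r_neq0 Mz); have h1 := ltz_pmod (dd y) Mz; lia.
  have absM : forall y : V, (`|(dd y %% M%:Z)%Z|%N)%:Z = (dd y %% M%:Z)%Z.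
    move=> y; have h0 := modz_ge0 (dd y) (lt0r_neq0 Mz); lia.
  pose f : F := [ffun x => Ordinal (ltM (val x))].
  exists (enum_rank f); rewrite enum_rankK.
  pose c' i := c i + \sum_(u in S) (dd u %/ M%:Z)%Z * W u i -
                (if depth i == n then r (fc i) else 0).
  exists c' => j lt.
  rewrite /c'.
  rewrite (eq_bigr (fun i => c i * Delta i j + (\sum_(u in S) (dd u %/ M%:Z)%Z * W u i) * Delta i j
      - (if depth i == n then r (fc i) else 0) * Delta i j)); last first.
    by move=> i _; rewrite mulrBl mulrDl.
  rewrite sumrB big_split /=.
  have mid : \sum_i (\sum_(u in S) (dd u %/ M%:Z)%Z * W u i) * Delta i j =
             if j \in S then (dd j %/ M%:Z)%Z * M%:Z else 0.
    rewrite (eq_bigr (fun i => \sum_(u in S) (dd u %/ M%:Z)%Z * (W u i * Delta j i))); last first.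
      by move=> i _; rewrite mulr_suml; apply: eq_bigr => u _; rewrite Delta_sym mulrA.
    rewrite exchange_big /=.
    rewrite (eq_bigr (fun u => if u == j then (dd u %/ M%:Z)%Z * M%:Z else 0)); last first.
      move=> u uS; rewrite -mulr_sumr.
      have du : depth u = n.+1 by move: uS; rewrite inE => /andP[/eqP].
      rewrite core ?du //.
      have -> : (j == par u) = false.
        by apply/negbTE; apply: contraTneq lt => ->; rewrite dep_par du ltnn.
      rewrite subr0 subSS eq_sym; case: eqP => [->|_]; last by rewrite mulr0.
      by [].
    rewrite -big_mkcondr /=.
    case: (boolP (j \in S)) => jS.
      rewrite (big_pred1 j) // => u /=; rewrite andbC.
      by case: (boolP (u == j)) => // /eqP ->.
    rewrite big_pred0 // => u /=; rewrite andbC.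
    by case: (boolP (u == j)) => // /eqP ->; rewrite (negbTE jS).
  have low : \sum_i (if depth i == n then r (fc i) else 0) * Delta i j =
             if depth j == n.+1 then - r (fc (par j)) else 0.
    rewrite (eq_bigr (fun i => if i == par j then
                (if depth j == n.+1 then - r (fc (par j)) else 0) else 0)); last first.
      move=> i _; case: (boolP (i == par j)) => [/eqP ei|ne].
        have dpj : depth (par j) = (depth j).-1 by rewrite dep_par.
        rewrite ei dpj Delta_low; last by rewrite dep_par prednK ?ltnn // (leq_ltn_trans _ lt).
        rewrite eqxx.
        case: (ltngtP (depth j) n.+1) => [l|g|e].
        - by move: lt; rewrite ltnNge -ltnS l.
        - rewrite ifF ?mul0r //; apply/negbTE; move: g; case: (depth j) => // m.
          by rewrite ltnS /= => g; rewrite neq_ltn g orbT.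
        - by rewrite e /= eqxx mulrN1.
      case: eqP => [di|]; last by rewrite mul0r.
      have ne' : par j != i by rewrite eq_sym.
      by rewrite Delta_low ?di // (negbTE ne') mulr0.
    by rewrite -big_mkcond big_pred1_eq.
  rewrite mid low.
  case: (ltngtP (depth j) n.+1) => [l|g|e].
  - by move: lt; rewrite ltnNge -ltnS l.
  - have jS : j \notin S by rewrite inE negb_and; apply/orP; left; rewrite neq_ltn g orbT.
    rewrite (negbTE jS) vec_out //.
    by rewrite hv //; ring.
  - idtac.
    case: (boolP (j \in S)) => jS.
      rewrite vec_in ffunE /= absM.
      have := divz_eq (dd j) M%:Z; rewrite /dd /r => D.
      move: D; set A := (_ %/ _)%Z; set B := (_ %% _)%Z; rewrite /r => D.
      rewrite opprK. move: D; set X := \sum_i c i * Delta i j.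
      set Y := \sum_i c i * Delta i (fc (par j)). lia.
    rewrite vec_out // addr0 opprK.
    have ej : j = fc (par j).
      by apply/eqP; move: jS; rewrite inE e eqxx /= negbK.
    rewrite /r -ej; ring.
Qed.

Lemma card_S : #|S| = if n == 0%N then q.+2 else (d * q.+2 ^ n.-1 * q.+1)%N.
Proof.
rewrite card_next //.
rewrite (eq_bigr (fun _ => if n == 0%N then q.+2 else q.+1)); last first.
  move=> p /eqP pn.
  have -> : [set y | child p y && (y != fc (par y))] = [set y | child p y] :\ fc p.
    apply/setP => y; rewrite !inE andbC; case: (boolP (child p y)) => cy; rewrite ?andbF //.
    by move: cy; rewrite childE => /andP[_ /eqP ->].
  have := cardsD1 (fc p) [set y | child p y].
  rewrite card_ch ?pn // inE child_ext ?pn //.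
  by case: (n == 0%N) => /= E; lia.
rewrite sum_nat_const.
rewrite (@eq_card _ _ [set y : V | depth y == n]); last by move=> y; rewrite inE.
rewrite card_dep ?(ltnW nh) //.
by case: (n == 0%N); rewrite ?mul1n.
Qed.

Lemma card_F : #|{: F}| = (M ^ #|S|)%N.
Proof.
rewrite card_ffun card_ord card_sig.
by have -> : #|[pred x in S]| = #|S| by apply: eq_card.
Qed.

End Main.

End Tree.

Theorem lemma8p17 (d h n : nat) :
  (3 <= d)%N -> (1 <= h)%N -> (n <= h - 1)%N ->
  quot_card (@inGm d h n.+1) (@inGm d h n)
    (if n == 0%N then (theta d h.+1 ^ (d - 1))%N
     else (theta d (h.+1 - n) ^ ((d - 2) * d * (d - 1) ^ (n - 1)))%N).
Proof.
case: d => [|[|[|q]]] // _ h1 nh'.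
have nh : (n < h)%N by lia.
have E : (if n == 0%N then (theta q.+3 h.+1 ^ (q.+3 - 1))%N
     else (theta q.+3 (h.+1 - n) ^ ((q.+3 - 2) * q.+3 * (q.+3 - 1) ^ (n - 1)))%N) =
     #|{: F q h n}|.
  rewrite card_F card_S // !thetaE.
  case: eqP => [->|_]; first by rewrite subn0.
  rewrite !subSS !subn0 subn1 /=; congr (_ ^ _).
  by rewrite [RHS]mulnC mulnA.
rewrite E; exact: quot_main.
Qed.
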